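(* Let $u:\mathbb{R}\times\mathbb{R}\to\mathbb{R}$ be a solution of the one-dimensional cubic nonlinear wave equation $$u_{tt}-u_{xx}+u^{3}=0,\qquad u(0,x)=u_0(x),\quad u_t(0,x)=u_1(x),$$ where $u_0\in C^1(\mathbb{R})$ with $u_0$ and $\partial_x u_0$ bounded on $\mathbb{R}$, and $u_1\in C^0(\mathbb{R})$ is bounded on $\mathbb{R}$. Then there is a constant $C$ (depending on $\|u_0\|_{L^\infty}$, $\|\partial_x u_0\|_{L^\infty}$, $\|u_1\|_{L^\infty}$) such that for all $t\ge 1$ and all $x\in\mathbb{R}$, $$|u(t,x)|\le C\,t^{1/3}.$$
   Context: The equation is the defocusing cubic wave equation on the real line with real-valued data that are uniformly $C^1\times C^0$, i.e. $\|u_0\|_{L^\infty}+\|\partial_x u_0\|_{L^\infty}+\|u_1\|_{L^\infty}<\infty$. *)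

(* Defs.v *)
From Stdlib Require Import Reals.
From Coquelicot Require Import Coquelicot.
Open Scope R_scope.

Definition is_C1 (f : R -> R) : Prop :=
  forall x, ex_derive f x /\ continuous (Derive f) x.

Definition jointly_continuous (u : R -> R -> R) : Prop :=
  forall t x, continuous (fun p : R * R => u (fst p) (snd p)) (t, x).

(* Solution of u_tt - u_xx + u^3 = 0, u(0)=u0, u_t(0)=u1, in the standard
   (mild / Duhamel) sense appropriate for C^1 x C^0 data in one dimension:
   u is continuous on R x R and for every (t,x),
   u(t,x) = (u0(x+t)+u0(x-t))/2 + 1/2 int_{x-t}^{x+t} u1
            - 1/2 int_0^t int_{x-(t-s)}^{x+(t-s)} u(s,y)^3 dy ds
   (oriented integrals; this is the d'Alembert-Duhamel formula, valid for
   all t in R). *)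
Definition is_solution_NLW3 (u0 u1 : R -> R) (u : R -> R -> R) : Prop :=
  jointly_continuous u /\
  forall t x,
    u t x = (u0 (x + t) + u0 (x - t)) / 2
            + / 2 * RInt u1 (x - t) (x + t)
            - / 2 * RInt (fun s => RInt (fun y => (u s y) ^ 3)
                                        (x - (t - s)) (x + (t - s))) 0 t.

(* Main.v *)
Require Import Defs.
From Stdlib Require Import Reals Lra Psatz Lia.
From Coquelicot Require Import Coquelicot.
Open Scope R_scope.

Definition cont2 (g : R -> R -> R) : Prop :=
  forall p y, continuous (fun z : R * R => g (fst z) (snd z)) (p, y).

Lemma cont2_slice2 g : cont2 g -> forall p y, continuous (g p) y.
Proof.
  intros H p y.
  apply (continuous_comp_2 (fun _ : R => p) (fun y : R => y) g y).
  - apply continuous_const.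
  - apply continuous_id.
  - apply H.
Qed.

Lemma cont2_slice1 g : cont2 g -> forall p y, continuous (fun q => g q y) p.
Proof.
  intros H p y.
  apply (continuous_comp_2 (fun q : R => q) (fun _ : R => y) g p).
  - apply continuous_id.
  - apply continuous_const.
  - apply H.
Qed.

Lemma cont2_2d g : cont2 g -> forall p y, continuity_2d_pt g p y.
Proof. intros H p y. apply continuity_2d_pt_filterlim. apply H. Qed.

Lemma ex_RInt_cont (f : R -> R) a b : (forall y, continuous f y) -> ex_RInt f a b.
Proof. intros H. apply (ex_RInt_continuous (V := R_CompleteNormedModule)). intros; apply H. Qed.

Lemma RInt_abs_bound (f : R -> R) a b K :
  ex_RInt f a b ->
  (forall y, Rmin a b <= y <= Rmax a b -> Rabs (f y) <= K) ->
  Rabs (RInt f a b) <= Rabs (b - a) * K.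
Proof.
  intros Hex Hb.
  destruct (Rle_or_lt a b) as [Hab|Hab].
  - rewrite (Rabs_right (b - a)) by lra.
    apply abs_RInt_le_const; auto.
    intros t Ht; apply Hb. rewrite Rmin_left, Rmax_right; lra.
  - rewrite <- opp_RInt_swap by (apply ex_RInt_swap; auto).
    change (opp (RInt f b a)) with (- RInt f b a).
    rewrite Rabs_Ropp. rewrite (Rabs_left (b - a)) by lra.
    replace (- (b - a)) with (a - b) by ring.
    apply abs_RInt_le_const; auto. lra.
    apply ex_RInt_swap; auto.
    intros t Ht; apply Hb. rewrite Rmin_right, Rmax_left; lra.
Qed.

Lemma KL {T} (F : (T -> Prop) -> Prop) {FF : Filter F} (g : R -> R -> R)
  (Hg : cont2 g) (P C D : T -> R) p0 c0 d0 :
  filterlim P F (locally p0) -> filterlim C F (locally c0) ->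
  filterlim D F (locally d0) ->
  filterlim (fun z => RInt (g (P z)) (C z) (D z)) F
            (locally (RInt (g p0) c0 d0)).
Proof.
  intros HP HC HD.
  apply filterlim_locally. intros eps.
  set (m := Rmin c0 d0 - 1). set (Mx := Rmax c0 d0 + 1).
  assert (HmM : m <= Mx) by (unfold m, Mx; generalize (Rmin_Rmax c0 d0); lra).
  destruct (continuity_ab_maj (fun y => Rabs (g p0 y)) m Mx HmM) as [ym [Hym _]].
  { intros c _. apply continuity_pt_filterlim.
    apply (continuous_comp (g p0) Rabs). apply cont2_slice2; auto.
    apply continuous_Rabs. }
  set (bd := Rabs (g p0 ym)).
  assert (Hbd0 : 0 <= bd) by apply Rabs_pos.
  set (L := Rabs (d0 - c0)).
  assert (HL : 0 <= L) by apply Rabs_pos.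
  assert (He1 : 0 < eps / (2 * (L + 1))).
  { apply Rdiv_lt_0_compat. apply cond_pos. lra. }
  set (eps1 := mkposreal _ He1).
  destruct (uniform_continuity_2d_1d' g m Mx p0) with (eps := eps1) as [dl Hdl].
  { intros x _. apply cont2_2d; auto. }
  set (eta := Rmin 1 (eps / (4 * (bd + eps1 + 1)))).
  assert (Heta : 0 < eta).
  { unfold eta. apply Rmin_pos. lra. apply Rdiv_lt_0_compat. apply cond_pos.
    assert (0 < eps1) by apply cond_pos. lra. }
  assert (Heta1 : eta <= 1) by apply Rmin_l.
  assert (Heta2 : eta * (4 * (bd + eps1 + 1)) <= eps).
  { assert (eta <= eps / (4 * (bd + eps1 + 1))) by apply Rmin_r.
    assert (0 < eps1) by apply cond_pos.
    apply Rmult_le_reg_r with (/ (4 * (bd + eps1 + 1))).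
    apply Rinv_0_lt_compat; lra.
    rewrite Rmult_assoc, Rinv_r by lra. lra. }
  set (eta' := mkposreal _ Heta).
  generalize (proj1 (filterlim_locally P p0) HP dl).
  generalize (proj1 (filterlim_locally C c0) HC eta').
  generalize (proj1 (filterlim_locally D d0) HD eta').
  intros H1 H2 H3.
  generalize (filter_and _ _ H1 (filter_and _ _ H2 H3)).
  apply filter_imp. intros z [Hd [Hc Hp]].
  change (Rabs (RInt (g (P z)) (C z) (D z) - RInt (g p0) c0 d0) < eps).
  change (Rabs (D z - d0) < eta) in Hd.
  change (Rabs (C z - c0) < eta) in Hc.
  change (Rabs (P z - p0) < dl) in Hp.
  set (p := P z) in *. set (c := C z) in *. set (d := D z) in *.
  assert (Hgc : forall q, ex_RInt (g q) c0 d0) by (intros; apply ex_RInt_cont, cont2_slice2; auto).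
  assert (Hex : forall q a b, ex_RInt (g q) a b) by (intros; apply ex_RInt_cont, cont2_slice2; auto).
  assert (Hclose : forall y, m <= y <= Mx -> Rabs (g p y - g p0 y) < eps1).
  { intros y Hy. assert (0 < dl) by apply cond_pos.
    generalize Hp; intro Hp'. apply Rabs_lt_between' in Hp'.
    apply (Hdl y p0 y p); try lra.
    rewrite Rminus_diag, Rabs_R0; apply cond_pos. }
  assert (Hbound : forall y, m <= y <= Mx -> Rabs (g p y) <= bd + eps1).
  { intros y Hy. specialize (Hclose y Hy). specialize (Hym y Hy).
    fold bd in Hym. 
    replace (g p y) with (g p0 y + (g p y - g p0 y)) by ring.
    eapply Rle_trans. apply Rabs_triang. lra. }
  rewrite <- (RInt_Chasles (g p) c c0 d) by auto.
  rewrite <- (RInt_Chasles (g p) c0 d0 d) by auto.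
  change plus with Rplus.
  assert (Hmin : forall a b, Rmin a b <= a) by (intros; apply Rmin_l).
  assert (A1 : Rabs (RInt (g p) c c0) <= Rabs (c0 - c) * (bd + eps1)).
  { apply RInt_abs_bound; auto. intros y Hy. apply Hbound.
    apply Rabs_lt_between' in Hc.
    unfold m, Mx. split.
    - apply Rle_trans with (Rmin c c0). 2: lra.
      generalize (Rmin_l c0 d0); intro. apply Rmin_glb; lra.
    - apply Rle_trans with (Rmax c c0). lra.
      generalize (Rmax_l c0 d0); intro. apply Rmax_lub; lra. }
  assert (A2 : Rabs (RInt (g p) d0 d) <= Rabs (d - d0) * (bd + eps1)).
  { apply RInt_abs_bound; auto. intros y Hy. apply Hbound.
    apply Rabs_lt_between' in Hd.
    unfold m, Mx. split.
    - apply Rle_trans with (Rmin d0 d). 2: lra.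
      generalize (Rmin_r c0 d0); intro. apply Rmin_glb; lra.
    - apply Rle_trans with (Rmax d0 d). lra.
      generalize (Rmax_r c0 d0); intro. apply Rmax_lub; lra. }
  assert (A3 : Rabs (RInt (g p) c0 d0 - RInt (g p0) c0 d0) <= L * eps1).
  { replace (RInt (g p) c0 d0 - RInt (g p0) c0 d0)
      with (RInt (fun y => g p y - g p0 y) c0 d0).
    apply RInt_abs_bound. apply (ex_RInt_minus (V := R_NormedModule)); auto.
    intros y Hy. left. apply Hclose. unfold m, Mx; split; lra.
    rewrite (RInt_minus (V := R_CompleteNormedModule)); auto. }
  assert (0 < eps1) by apply cond_pos.
  assert (Hq : L * eps1 <= eps / 2).
  { simpl. apply Rle_trans with ((L+1) * (eps / (2 * (L + 1)))).
    apply Rmult_le_compat_r; lra. right. field. lra. }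
  assert (Rabs (c0 - c) <= eta) by (rewrite Rabs_minus_sym; lra).
  assert (Rabs (d - d0) <= eta) by lra.
  assert (Rabs (c0 - c) * (bd + eps1) <= eta * (bd + eps1)) by (apply Rmult_le_compat_r; lra).
  assert (Rabs (d - d0) * (bd + eps1) <= eta * (bd + eps1)) by (apply Rmult_le_compat_r; lra).
  replace (RInt (g p) c c0 + (RInt (g p) c0 d0 + RInt (g p) d0 d) - RInt (g p0) c0 d0)
    with (RInt (g p) c c0 + RInt (g p) d0 d + (RInt (g p) c0 d0 - RInt (g p0) c0 d0)) by ring.
  eapply Rle_lt_trans. apply Rabs_triang.
  eapply Rle_lt_trans. apply Rplus_le_compat_r. apply Rabs_triang.
  assert (0 < eps) by apply cond_pos.
  nra.
Qed.

Lemma cR_plus {T : UniformSpace} (f g : T -> R) x :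
  continuous f x -> continuous g x -> continuous (fun z => f z + g z) x.
Proof. intros Hf Hg. exact (continuous_plus f g x Hf Hg). Qed.
Lemma cR_minus {T : UniformSpace} (f g : T -> R) x :
  continuous f x -> continuous g x -> continuous (fun z => f z - g z) x.
Proof. intros Hf Hg. exact (continuous_minus f g x Hf Hg). Qed.
Lemma cR_mult {T : UniformSpace} (f g : T -> R) x :
  continuous f x -> continuous g x -> continuous (fun z => f z * g z) x.
Proof. intros Hf Hg. exact (continuous_mult f g x Hf Hg). Qed.
Lemma cR_const {T : UniformSpace} (c : R) (x : T) : continuous (fun _ => c) x.
Proof. apply continuous_const. Qed.
Lemma cR_pow {T : UniformSpace} (f : T -> R) x n :
  continuous f x -> continuous (fun z => f z ^ n) x.
Proof. intros Hf. induction n; simpl. apply cR_const. apply cR_mult; auto. Qed.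
Lemma cR_fst (p : R * R) : continuous (fun z : R * R => fst z) p.
Proof. destruct p; apply continuous_fst. Qed.
Lemma cR_snd (p : R * R) : continuous (fun z : R * R => snd z) p.
Proof. destruct p; apply continuous_snd. Qed.

Lemma cont2_comp (h : R -> R -> R) (f1 f2 : R * R -> R) :
  cont2 h -> (forall z, continuous f1 z) -> (forall z, continuous f2 z) ->
  cont2 (fun x y => h (f1 (x, y)) (f2 (x, y))).
Proof.
  intros Hh H1 H2 p y.
  apply (continuous_ext (fun z : R * R => h (f1 z) (f2 z))).
  { intros [a b]; reflexivity. }
  apply (continuous_comp_2 f1 f2 h (p, y)); auto.
Qed.

Lemma cont2_cont (g : R -> R -> R) (F : R -> R -> R) :
  cont2 g -> (forall x y, g x y = F x y) -> cont2 F.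
Proof.
  intros H E p y. apply (continuous_ext (fun z : R * R => g (fst z) (snd z))).
  intros; apply E. apply H.
Qed.

Lemma cont_RInt_param (g : R -> R -> R) (P C D : R -> R) t :
  cont2 g -> continuous P t -> continuous C t -> continuous D t ->
  continuous (fun z => RInt (g (P z)) (C z) (D z)) t.
Proof. intros Hg HP HC HD. apply (KL (locally t) g Hg P C D); auto. Qed.

Lemma cont2_RInt_param (g : R -> R -> R) (P C D : R * R -> R) z :
  cont2 g -> continuous P z -> continuous C z -> continuous D z ->
  continuous (fun w => RInt (g (P w)) (C w) (D w)) z.
Proof. intros Hg HP HC HD. apply (KL (locally z) g Hg P C D); auto. Qed.

Lemma is_derive_val (f : R -> R) x l l' : is_derive f x l -> l = l' -> is_derive f x l'.
Proof. intros H ->; exact H. Qed.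

Lemma is_derive_RInt_up (g : R -> R) a c :
  (forall y, continuous g y) -> is_derive (fun x => RInt g a x) c (g c).
Proof.
  intros Hg. apply (is_derive_RInt g (fun x => RInt g a x) a c). apply filter_forall. intros x.
  apply (RInt_correct (V := R_CompleteNormedModule)). apply ex_RInt_cont; auto.
  apply Hg.
Qed.

Lemma is_derive_RInt_comp (g : R -> R) a (phi : R -> R) c dphi :
  (forall y, continuous g y) -> is_derive phi c dphi ->
  is_derive (fun x => RInt g a (phi x)) c (dphi * g (phi c)).
Proof.
  intros Hg Hp.
  apply (is_derive_comp (fun x => RInt g a x) phi c). 
  apply is_derive_RInt_up; auto. exact Hp.
Qed.

Lemma is_derive_RInt_comp_low (g : R -> R) b (phi : R -> R) c dphi :
  (forall y, continuous g y) -> is_derive phi c dphi ->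
  is_derive (fun x => RInt g (phi x) b) c (- (dphi * g (phi c))).
Proof.
  intros Hg Hp.
  apply is_derive_ext with (fun x => - RInt g b (phi x)).
  { intros t. rewrite <- (opp_RInt_swap (V := R_CompleteNormedModule) g b (phi t)). reflexivity.
    apply ex_RInt_cont; auto. }
  apply (is_derive_opp (fun x => RInt g b (phi x))).
  apply is_derive_RInt_comp; auto.
Qed.

Lemma dR_plus (f g : R -> R) x l1 l2 :
  is_derive f x l1 -> is_derive g x l2 -> is_derive (fun z => f z + g z) x (l1 + l2).
Proof. intros H1 H2. exact (is_derive_plus f g x l1 l2 H1 H2). Qed.
Lemma dR_minus (f g : R -> R) x l1 l2 :
  is_derive f x l1 -> is_derive g x l2 -> is_derive (fun z => f z - g z) x (l1 - l2).
Proof. intros H1 H2. exact (is_derive_minus f g x l1 l2 H1 H2). Qed.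
Lemma dR_scal (f : R -> R) k x l :
  is_derive f x l -> is_derive (fun z => k * f z) x (k * l).
Proof. intros H. exact (is_derive_scal f x k l H). Qed.
Lemma dR_const (c x : R) : is_derive (fun _ => c) x 0.
Proof. exact (is_derive_const c x). Qed.

Definition g0 (u : R -> R -> R) s y := u s y ^ 3.
Definition W (u : R -> R -> R) a b := u ((a - b) / 2) ((a + b) / 2).
Definition FN (u : R -> R -> R) b a s := RInt (g0 u s) (b + s) (a - s).

Lemma cont2_g0 u : jointly_continuous u -> cont2 (g0 u).
Proof. intros H p y. unfold g0. apply (cR_pow (fun z : R * R => u (fst z) (snd z))). apply H. Qed.

Lemma cont_half_minus z : continuous (fun w : R * R => (fst w - snd w) / 2) z.
Proof. apply cR_mult. apply cR_minus. apply cR_fst. apply cR_snd. apply cR_const. Qed.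
Lemma cont_half_plus z : continuous (fun w : R * R => (fst w + snd w) / 2) z.
Proof. apply cR_mult. apply cR_plus. apply cR_fst. apply cR_snd. apply cR_const. Qed.

Lemma cont2_W u : jointly_continuous u -> cont2 (W u).
Proof.
  intros H. unfold W.
  apply (cont2_comp u (fun w => (fst w - snd w) / 2) (fun w => (fst w + snd w) / 2) H).
  apply cont_half_minus. apply cont_half_plus.
Qed.

Lemma W_formula u0 u1 u a b : is_solution_NLW3 u0 u1 u ->
  W u a b = (u0 a + u0 b) / 2 + / 2 * RInt u1 b a
            - / 2 * RInt (fun s => FN u b a s) 0 ((a - b) / 2).
Proof.
  intros [_ H]. unfold W. rewrite H.
  replace ((a + b) / 2 + (a - b) / 2) with a by field.
  replace ((a + b) / 2 - (a - b) / 2) with b by field.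
  f_equal. f_equal.
  apply RInt_ext. intros s _. unfold FN, g0.
  replace ((a + b) / 2 - ((a - b) / 2 - s)) with (b + s) by field.
  replace ((a + b) / 2 + ((a - b) / 2 - s)) with (a - s) by field.
  reflexivity.
Qed.

Lemma W_diag u0 u1 u a : is_solution_NLW3 u0 u1 u -> W u a a = u0 a.
Proof.
  intros Hs. rewrite (W_formula u0 u1 u a a Hs).
  replace ((a - a) / 2) with 0 by field.
  rewrite !RInt_point. change (@zero R_CompleteNormedModule) with 0. field.
Qed.

Lemma cont_FN u b y t : jointly_continuous u -> continuous (fun s => FN u b y s) t.
Proof.
  intros H. unfold FN.
  apply (cont_RInt_param (g0 u) (fun s => s) (fun s => b + s) (fun s => y - s)).
  apply cont2_g0; auto. apply continuous_id.
  apply cR_plus. apply cR_const. apply continuous_id.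
  apply cR_minus. apply cR_const. apply continuous_id.
Qed.

Lemma dFN_a u b a s : jointly_continuous u ->
  is_derive (fun a => FN u b a s) a (g0 u s (a - s)).
Proof.
  intros H. unfold FN.
  eapply is_derive_val.
  apply (is_derive_RInt_comp (g0 u s) (b + s) (fun a => a - s) a 1).
  apply cont2_slice2, cont2_g0; auto.
  auto_derive; auto.
  apply Rmult_1_l.
Qed.

Lemma dFN_b u b a s : jointly_continuous u ->
  is_derive (fun b => FN u b a s) b (- g0 u s (b + s)).
Proof.
  intros H. unfold FN.
  eapply is_derive_val.
  apply (is_derive_RInt_comp_low (g0 u s) (a - s) (fun b => b + s) b 1).
  apply cont2_slice2, cont2_g0; auto.
  auto_derive; auto.
  change (- (1 * g0 u s (b + s)) = - g0 u s (b + s)); ring.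
Qed.

Definition one_pos := mkposreal 1 Rlt_0_1.

Lemma dN_a u b a : jointly_continuous u ->
  is_derive (fun a => RInt (fun s => FN u b a s) 0 ((a - b) / 2)) a
            (RInt (fun s => g0 u s (a - s)) 0 ((a - b) / 2)).
Proof.
  intros Hu.
  assert (Hc2 : cont2 (fun x s => g0 u s (x - s))).
  { apply (cont2_comp (g0 u) (fun w => snd w) (fun w => fst w - snd w)).
    apply cont2_g0; auto. apply cR_snd. intros; apply cR_minus; [apply cR_fst|apply cR_snd]. }
  assert (HD : forall x s, g0 u s (x - s) = Derive (fun z => FN u b z s) x).
  { intros x s. symmetry. apply is_derive_unique. apply dFN_a; auto. }
  assert (HD2 : forall x s, continuity_2d_pt (fun x0 v => Derive (fun z => FN u b z v) x0) x s).
  { intros x s. apply (continuity_2d_pt_ext _ _ x s HD). apply cont2_2d; auto. }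
  assert (Hex : forall y c d, ex_RInt (fun t => FN u b y t) c d).
  { intros. apply ex_RInt_cont. intros; apply cont_FN; auto. }
  eapply is_derive_val.
  apply (is_derive_RInt_param_bound_comp (fun a s => FN u b a s) (fun _ => 0)
           (fun x => (x - b) / 2) a 0 (/ 2)).
  - apply filter_forall; auto.
  - exists one_pos. apply filter_forall; auto.
  - exists one_pos. apply filter_forall; auto.
  - apply dR_const.
  - auto_derive; auto; field.
  - exists one_pos. apply filter_forall. intros x t _. eexists. apply dFN_a; auto.
  - intros; apply HD2.
  - exists one_pos. intros; apply HD2.
  - exists one_pos. intros; apply HD2.
  - apply continuity_pt_filterlim. apply cont_FN; auto.
  - apply continuity_pt_filterlim. apply cont_FN; auto.
  - unfold FN at 2 3.
    replace (a - (a - b) / 2) with (b + (a - b) / 2) by field.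
    rewrite RInt_point. change (@zero R_CompleteNormedModule) with 0.
    rewrite Rmult_0_r, Rmult_0_l, !Rplus_0_r.
    apply RInt_ext. intros; symmetry; apply HD.
Qed.

Lemma dN_b u b a : jointly_continuous u ->
  is_derive (fun b => RInt (fun s => FN u b a s) 0 ((a - b) / 2)) b
            (- RInt (fun s => g0 u s (b + s)) 0 ((a - b) / 2)).
Proof.
  intros Hu.
  assert (Hc2 : cont2 (fun x s => - g0 u s (x + s))).
  { apply (cont2_comp (fun p y => - g0 u p y) (fun w => snd w) (fun w => fst w + snd w)).
    intros p y. apply (continuous_opp (fun z : R * R => g0 u (fst z) (snd z))).
    apply cont2_g0; auto. apply cR_snd. intros; apply cR_plus; [apply cR_fst|apply cR_snd]. }
  assert (HD : forall x s, - g0 u s (x + s) = Derive (fun z => FN u z a s) x).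
  { intros x s. symmetry. apply is_derive_unique. apply dFN_b; auto. }
  assert (HD2 : forall x s, continuity_2d_pt (fun x0 v => Derive (fun z => FN u z a v) x0) x s).
  { intros x s. apply (continuity_2d_pt_ext _ _ x s HD). apply cont2_2d; auto. }
  assert (Hex : forall y c d, ex_RInt (fun t => FN u y a t) c d).
  { intros. apply ex_RInt_cont. intros; apply cont_FN; auto. }
  eapply is_derive_val.
  apply (is_derive_RInt_param_bound_comp (fun b s => FN u b a s) (fun _ => 0)
           (fun x => (a - x) / 2) b 0 (- / 2)).
  - apply filter_forall; auto.
  - exists one_pos. apply filter_forall; auto.
  - exists one_pos. apply filter_forall; auto.
  - apply dR_const.
  - auto_derive; auto; field.
  - exists one_pos. apply filter_forall. intros x t _. eexists. apply dFN_b; auto.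
  - intros; apply HD2.
  - exists one_pos. intros; apply HD2.
  - exists one_pos. intros; apply HD2.
  - apply continuity_pt_filterlim. apply cont_FN; auto.
  - apply continuity_pt_filterlim. apply cont_FN; auto.
  - unfold FN at 2 3.
    replace (a - (a - b) / 2) with (b + (a - b) / 2) by field.
    rewrite RInt_point. change (@zero R_CompleteNormedModule) with 0.
    rewrite Rmult_0_r, !Rplus_0_r.
    rewrite <- (RInt_ext (fun x => - g0 u x (b + x))).
    2: { intros; apply HD. }
    rewrite (RInt_opp (V := R_CompleteNormedModule) (fun x => g0 u x (b + x))). change (- RInt (fun x => g0 u x (b + x)) 0 ((a - b) / 2) + 0 * - / 2 = - RInt (fun s => g0 u s (b + s)) 0 ((a - b) / 2)); ring.
    apply ex_RInt_cont. intros y.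
    apply (continuous_comp_2 (fun s => s) (fun s => b + s) (g0 u)).
    apply continuous_id. apply cR_plus; [apply cR_const|apply continuous_id].
    apply cont2_g0; auto.
Qed.

Ltac req := match goal with |- ?x = ?y => change (@eq R x y) end.

Definition Pw (u0 u1 : R -> R) (u : R -> R -> R) a b :=
  Derive u0 a + u1 a - RInt (fun s => g0 u s (a - s)) 0 ((a - b) / 2).
Definition Qw (u0 u1 : R -> R) (u : R -> R -> R) a b :=
  - Derive u0 b + u1 b - RInt (fun s => g0 u s (b + s)) 0 ((a - b) / 2).

Lemma cont2_Gm u : jointly_continuous u -> cont2 (fun x s => g0 u s (x - s)).
Proof.
  intros Hu. apply (cont2_comp (g0 u) (fun w => snd w) (fun w => fst w - snd w)).
  apply cont2_g0; auto. apply cR_snd. intros; apply cR_minus; [apply cR_fst|apply cR_snd].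
Qed.
Lemma cont2_Gp u : jointly_continuous u -> cont2 (fun x s => g0 u s (x + s)).
Proof.
  intros Hu. apply (cont2_comp (g0 u) (fun w => snd w) (fun w => fst w + snd w)).
  apply cont2_g0; auto. apply cR_snd. intros; apply cR_plus; [apply cR_fst|apply cR_snd].
Qed.

Lemma dW_a u0 u1 u a b : is_C1 u0 -> (forall x, continuous u1 x) ->
  is_solution_NLW3 u0 u1 u ->
  is_derive (fun a => W u a b) a (Pw u0 u1 u a b / 2).
Proof.
  intros H0 H1 Hs.
  apply is_derive_ext with (fun a => / 2 * u0 a + / 2 * u0 b + / 2 * RInt u1 b a
            - / 2 * RInt (fun s => FN u b a s) 0 ((a - b) / 2)).
  { intros t. rewrite (W_formula u0 u1 u t b Hs). req. field. }
  eapply is_derive_val.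
  apply dR_minus. apply dR_plus. apply dR_plus.
  apply dR_scal. apply Derive_correct. apply H0.
  apply dR_const.
  apply dR_scal. apply is_derive_RInt_up. auto.
  apply dR_scal. apply dN_a. apply Hs.
  unfold Pw. req. field.
Qed.

Lemma dW_b u0 u1 u a b : is_C1 u0 -> (forall x, continuous u1 x) ->
  is_solution_NLW3 u0 u1 u ->
  is_derive (fun b => W u a b) b (- Qw u0 u1 u a b / 2).
Proof.
  intros H0 H1 Hs.
  apply is_derive_ext with (fun b => / 2 * u0 a + / 2 * u0 b + / 2 * RInt u1 b a
            - / 2 * RInt (fun s => FN u b a s) 0 ((a - b) / 2)).
  { intros t. rewrite (W_formula u0 u1 u a t Hs). req. field. }
  eapply is_derive_val.
  apply dR_minus. apply dR_plus. apply dR_plus.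
  apply dR_const.
  apply dR_scal. apply Derive_correct. apply H0.
  apply dR_scal. apply (is_derive_RInt_comp_low u1 a (fun b => b) b 1). auto.
  auto_derive; auto.
  apply dR_scal. apply dN_b. apply Hs.
  unfold Qw. req. field.
Qed.

Lemma dPw_b u0 u1 u a b : is_solution_NLW3 u0 u1 u ->
  is_derive (fun b => Pw u0 u1 u a b) b (W u a b ^ 3 / 2).
Proof.
  intros Hs. unfold Pw.
  eapply is_derive_val.
  apply dR_minus. apply dR_const.
  apply (is_derive_RInt_comp (fun s => g0 u s (a - s)) 0 (fun b => (a - b) / 2) b (- / 2)).
  apply (cont2_slice2 (fun x s => g0 u s (x - s))). apply cont2_Gm, Hs.
  auto_derive; auto; field.
  unfold W, g0. replace (a - (a - b) / 2) with ((a + b) / 2) by field. req. field.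
Qed.

Lemma dQw_a u0 u1 u a b : is_solution_NLW3 u0 u1 u ->
  is_derive (fun a => Qw u0 u1 u a b) a (- W u a b ^ 3 / 2).
Proof.
  intros Hs. unfold Qw.
  eapply is_derive_val.
  apply dR_minus. apply dR_const.
  apply (is_derive_RInt_comp (fun s => g0 u s (b + s)) 0 (fun a => (a - b) / 2) a (/ 2)).
  apply (cont2_slice2 (fun x s => g0 u s (x + s))). apply cont2_Gp, Hs.
  auto_derive; auto; field.
  unfold W, g0. replace (b + (a - b) / 2) with ((a + b) / 2) by field. req. field.
Qed.

Lemma cont2_Pw u0 u1 u : is_C1 u0 -> (forall x, continuous u1 x) ->
  is_solution_NLW3 u0 u1 u -> cont2 (Pw u0 u1 u).
Proof.
  intros H0 H1 Hs p y. unfold Pw.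
  apply cR_minus. apply cR_plus.
  apply (continuous_comp (fun z : R * R => fst z) (Derive u0)). apply cR_fst. apply H0.
  apply (continuous_comp (fun z : R * R => fst z) u1). apply cR_fst. apply H1.
  apply (cont2_RInt_param (fun x s => g0 u s (x - s)) (fun z => fst z) (fun _ => 0)
           (fun z => (fst z - snd z) / 2)).
  apply cont2_Gm, Hs. apply cR_fst. apply cR_const. apply cont_half_minus.
Qed.

Lemma cont2_Qw u0 u1 u : is_C1 u0 -> (forall x, continuous u1 x) ->
  is_solution_NLW3 u0 u1 u -> cont2 (Qw u0 u1 u).
Proof.
  intros H0 H1 Hs p y. unfold Qw.
  apply cR_minus. apply cR_plus.
  apply (continuous_opp (fun z : R * R => Derive u0 (snd z))).
  apply (continuous_comp (fun z : R * R => snd z) (Derive u0)). apply cR_snd. apply H0.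
  apply (continuous_comp (fun z : R * R => snd z) u1). apply cR_snd. apply H1.
  apply (cont2_RInt_param (fun x s => g0 u s (x + s)) (fun z => snd z) (fun _ => 0)
           (fun z => (fst z - snd z) / 2)).
  apply cont2_Gp, Hs. apply cR_snd. apply cR_const. apply cont_half_minus.
Qed.

Lemma Pw_diag u0 u1 u a : Pw u0 u1 u a a = Derive u0 a + u1 a.
Proof. unfold Pw. replace ((a - a) / 2) with 0 by field. rewrite RInt_point. change (@zero R_CompleteNormedModule) with 0. ring. Qed.
Lemma Qw_diag u0 u1 u a : Qw u0 u1 u a a = - Derive u0 a + u1 a.
Proof. unfold Qw. replace ((a - a) / 2) with 0 by field. rewrite RInt_point. change (@zero R_CompleteNormedModule) with 0. ring. Qed.

Lemma RInt_of_deriv (F dF : R -> R) a b :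
  (forall x, is_derive F x (dF x)) -> (forall x, continuous dF x) ->
  RInt dF a b = F b - F a.
Proof.
  intros H1 H2. apply is_RInt_unique.
  apply (is_RInt_derive (V := R_CompleteNormedModule)); intros; auto.
Qed.

Lemma deriv0_const (F : R -> R) : (forall x, is_derive F x 0) -> forall a b, F b = F a.
Proof.
  intros H a b.
  generalize (RInt_of_deriv F (fun _ => 0) a b H (fun x => continuous_const _ x)).
  rewrite RInt_const. change (scal (b - a) 0) with ((b - a) * 0). intros E. lra.
Qed.

Lemma cont_diag (g : R -> R -> R) : cont2 g -> forall x, continuous (fun a => g a a) x.
Proof.
  intros H x. apply (continuous_comp_2 (fun a => a) (fun a => a) g x).
  apply continuous_id. apply continuous_id. apply H.
Qed.

Lemma cont2_pow g n : cont2 g -> cont2 (fun x y => g x y ^ n).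
Proof. intros H p y. apply (cR_pow (fun z : R * R => g (fst z) (snd z))). apply H. Qed.

Lemma cont2_mult g h : cont2 g -> cont2 h -> cont2 (fun x y => g x y * h x y).
Proof. intros H1 H2 p y. apply (cR_mult (fun z : R * R => g (fst z) (snd z)) (fun z : R * R => h (fst z) (snd z))); auto. Qed.

Lemma cont2_plus g h : cont2 g -> cont2 h -> cont2 (fun x y => g x y + h x y).
Proof. intros H1 H2 p y. apply (cR_plus (fun z : R * R => g (fst z) (snd z)) (fun z : R * R => h (fst z) (snd z))); auto. Qed.

Lemma cont2_opp g : cont2 g -> cont2 (fun x y => - g x y).
Proof. intros H p y. apply (continuous_opp (fun z : R * R => g (fst z) (snd z))); auto. Qed.

Lemma cont2_cst c : cont2 (fun _ _ => c).
Proof. intros p y. apply cR_const. Qed.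

Lemma L_identity u0 u1 u b0 a : is_C1 u0 -> (forall x, continuous u1 x) ->
  is_solution_NLW3 u0 u1 u ->
  RInt (fun a' => Pw u0 u1 u a' b0 ^ 2) b0 a + / 2 * RInt (fun b => W u a b ^ 4) b0 a
  = RInt (fun a' => Pw u0 u1 u a' a' ^ 2 + / 2 * W u a' a' ^ 4) b0 a.
Proof.
  intros H0 H1 Hs.
  assert (HW := cont2_W u (proj1 Hs)).
  assert (HP := cont2_Pw u0 u1 u H0 H1 Hs).
  set (P := Pw u0 u1 u) in *.
  assert (HD : forall x v, 2 * W u x v ^ 3 * P x v = Derive (fun z => W u z v ^ 4) x).
  { intros x v. symmetry. apply is_derive_unique.
    eapply is_derive_val. apply (is_derive_pow (fun z => W u z v)). apply (dW_a u0 u1 u); auto.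
    unfold P. simpl. req. field. }
  assert (HC : cont2 (fun x v => 2 * W u x v ^ 3 * P x v)).
  { apply cont2_mult. apply cont2_mult. apply cont2_cst. apply cont2_pow; auto. auto. }
  assert (HD2 : forall x s, continuity_2d_pt (fun x0 v => Derive (fun z => W u z v ^ 4) x0) x s).
  { intros x s. apply (continuity_2d_pt_ext _ _ x s HD). apply cont2_2d; auto. }
  assert (Hex : forall y c d, ex_RInt (fun t => W u y t ^ 4) c d).
  { intros. apply ex_RInt_cont. intros; apply (cont2_slice2 (fun x y => W u x y ^ 4)). apply cont2_pow; auto. }
  set (F := fun a => RInt (fun a' => P a' b0 ^ 2) b0 a + / 2 * RInt (fun b => W u a b ^ 4) b0 a
     - RInt (fun a' => P a' a' ^ 2 + / 2 * W u a' a' ^ 4) b0 a).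
  assert (HF : forall x, is_derive F x 0).
  { intros x. unfold F.
    eapply is_derive_val.
    apply dR_minus. apply dR_plus.
    apply is_derive_RInt_up. intros y.
    apply (cR_pow (fun a => P a b0)). apply cont2_slice1; auto.
    apply dR_scal.
    apply (is_derive_RInt_param_bound_comp (fun a b => W u a b ^ 4) (fun _ => b0)
           (fun x => x) x 0 1).
    - apply filter_forall; auto.
    - exists one_pos. apply filter_forall; auto.
    - exists one_pos. apply filter_forall; auto.
    - apply dR_const.
    - apply (is_derive_id (K := R_AbsRing)).
    - exists one_pos. apply filter_forall. intros x0 t _. eexists.
      symmetry in HD. 
      apply (is_derive_pow (fun z => W u z t)). apply (dW_a u0 u1 u); auto.
    - intros; apply HD2.
    - exists one_pos. intros; apply HD2.
    - exists one_pos. intros; apply HD2.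
    - apply continuity_pt_filterlim. apply (cont2_slice2 (fun x y => W u x y ^ 4)). apply cont2_pow; auto.
    - apply continuity_pt_filterlim. apply (cont2_slice2 (fun x y => W u x y ^ 4)). apply cont2_pow; auto.
    - apply is_derive_RInt_up. apply (cont_diag (fun x y => P x y ^ 2 + / 2 * W u x y ^ 4)).
      apply cont2_plus. apply cont2_pow; auto. apply cont2_mult. apply cont2_cst. apply cont2_pow; auto.
    - rewrite <- (RInt_ext (fun v => 2 * W u x v ^ 3 * P x v)).
      2: { intros; apply HD. }
      rewrite (RInt_of_deriv (fun v => 2 * P x v ^ 2) (fun v => 2 * W u x v ^ 3 * P x v)).
      req. field.
      intros v. eapply is_derive_val. apply dR_scal. apply (is_derive_pow (fun v => P x v)).
      apply (dPw_b u0 u1 u); auto. simpl. req. field.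
      intros v. apply (cont2_slice2 (fun x v => 2 * W u x v ^ 3 * P x v)); auto. }
  generalize (deriv0_const F HF b0 a). unfold F.
  rewrite !RInt_point. change (@zero R_CompleteNormedModule) with 0. intros E. lra.
Qed.

Lemma K_identity u0 u1 u a0 b : is_C1 u0 -> (forall x, continuous u1 x) ->
  is_solution_NLW3 u0 u1 u ->
  RInt (fun b' => Qw u0 u1 u a0 b' ^ 2) b a0 + / 2 * RInt (fun a => W u a b ^ 4) b a0
  = RInt (fun b' => Qw u0 u1 u b' b' ^ 2 + / 2 * W u b' b' ^ 4) b a0.
Proof.
  intros H0 H1 Hs.
  assert (HW := cont2_W u (proj1 Hs)).
  assert (HQ := cont2_Qw u0 u1 u H0 H1 Hs).
  set (Q := Qw u0 u1 u) in *.
  assert (HD : forall x v, - (2 * W u v x ^ 3 * Q v x) = Derive (fun z => W u v z ^ 4) x).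
  { intros x v. symmetry. apply is_derive_unique.
    eapply is_derive_val. apply (is_derive_pow (fun z => W u v z)). apply (dW_b u0 u1 u); auto.
    unfold Q. simpl. req. field. }
  assert (HC : cont2 (fun x v => - (2 * W u v x ^ 3 * Q v x))).
  { intros p y. apply (continuous_opp (fun z : R * R => 2 * W u (snd z) (fst z) ^ 3 * Q (snd z) (fst z))).
    apply (cont2_mult (fun x v => 2 * W u v x ^ 3) (fun x v => Q v x)).
    apply cont2_mult. apply cont2_cst.
    apply cont2_pow. apply (cont2_comp (W u) (fun w => snd w) (fun w => fst w)); auto.
    apply cR_snd. apply cR_fst.
    apply (cont2_comp Q (fun w => snd w) (fun w => fst w)); auto.
    apply cR_snd. apply cR_fst. }
  assert (HD2 : forall x s, continuity_2d_pt (fun x0 v => Derive (fun z => W u v z ^ 4) x0) x s).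
  { intros x s. apply (continuity_2d_pt_ext _ _ x s HD). apply cont2_2d; auto. }
  assert (Hex : forall y c d, ex_RInt (fun t => W u t y ^ 4) c d).
  { intros. apply ex_RInt_cont. intros; apply (cont2_slice1 (fun x y => W u x y ^ 4)). apply cont2_pow; auto. }
  set (F := fun b => RInt (fun b' => Q a0 b' ^ 2) b a0 + / 2 * RInt (fun a => W u a b ^ 4) b a0
     - RInt (fun b' => Q b' b' ^ 2 + / 2 * W u b' b' ^ 4) b a0).
  assert (HF : forall x, is_derive F x 0).
  { intros x. unfold F.
    eapply is_derive_val.
    apply dR_minus. apply dR_plus.
    apply (is_derive_RInt_comp_low _ a0 (fun b => b) x 1). intros y.
    apply (cR_pow (fun b => Q a0 b)). apply cont2_slice2; auto.
    apply (is_derive_id (K := R_AbsRing)).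
    apply dR_scal.
    apply (is_derive_RInt_param_bound_comp (fun b a => W u a b ^ 4) (fun x => x)
           (fun _ => a0) x 1 0).
    - apply filter_forall; auto.
    - exists one_pos. apply filter_forall; auto.
    - exists one_pos. apply filter_forall; auto.
    - apply (is_derive_id (K := R_AbsRing)).
    - apply dR_const.
    - exists one_pos. apply filter_forall. intros x0 t _. eexists.
      apply (is_derive_pow (fun z => W u t z)). apply (dW_b u0 u1 u); auto.
    - intros; apply HD2.
    - exists one_pos. intros; apply HD2.
    - exists one_pos. intros; apply HD2.
    - apply continuity_pt_filterlim. apply (cont2_slice1 (fun x y => W u x y ^ 4)). apply cont2_pow; auto.
    - apply continuity_pt_filterlim. apply (cont2_slice1 (fun x y => W u x y ^ 4)). apply cont2_pow; auto.
    - apply (is_derive_RInt_comp_low _ a0 (fun b => b) x 1). apply (cont_diag (fun x y => Q x y ^ 2 + / 2 * W u x y ^ 4)).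
      apply cont2_plus. apply cont2_pow; auto. apply cont2_mult. apply cont2_cst. apply cont2_pow; auto.
      apply (is_derive_id (K := R_AbsRing)).
    - rewrite <- (RInt_ext (fun v => - (2 * W u v x ^ 3 * Q v x))).
      2: { intros; apply HD. }
      rewrite (RInt_of_deriv (fun v => 2 * Q v x ^ 2) (fun v => - (2 * W u v x ^ 3 * Q v x))).
      req. field.
      intros v. eapply is_derive_val. apply dR_scal. apply (is_derive_pow (fun v => Q v x)).
      apply (dQw_a u0 u1 u); auto. simpl. req. field.
      intros v. apply (cont2_slice1 (fun x v => - (2 * W u x v ^ 3 * Q x v))).
      apply cont2_opp.
      apply cont2_mult. apply cont2_mult. apply cont2_cst. apply cont2_pow; auto. auto. }
  generalize (deriv0_const F HF a0 b). unfold F.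
  rewrite !RInt_point. change (@zero R_CompleteNormedModule) with 0. intros E. lra.
Qed.

Lemma RInt_ge0 (f : R -> R) a b : a <= b -> (forall y, continuous f y) ->
  (forall x, 0 <= f x) -> 0 <= RInt f a b.
Proof.
  intros Hab Hc Hp. apply (is_RInt_ge_0 f a b); auto.
  apply (RInt_correct (V := R_CompleteNormedModule)). apply ex_RInt_cont; auto.
Qed.

Lemma RInt_le_c (f : R -> R) a b c : a <= b -> (forall y, continuous f y) ->
  (forall x, a <= x <= b -> f x <= c) -> RInt f a b <= (b - a) * c.
Proof.
  intros Hab Hc Hp.
  replace ((b - a) * c) with (RInt (fun _ => c) a b).
  apply RInt_le; auto. apply ex_RInt_cont; auto.
  apply ex_RInt_cont; intros; apply continuous_const.
  intros; apply Hp; lra.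
  rewrite RInt_const. reflexivity.
Qed.

Lemma RInt_ge_c (f : R -> R) a b c : a <= b -> (forall y, continuous f y) ->
  (forall x, a <= x <= b -> c <= f x) -> (b - a) * c <= RInt f a b.
Proof.
  intros Hab Hc Hp.
  replace ((b - a) * c) with (RInt (fun _ => c) a b).
  apply RInt_le; auto.
  apply ex_RInt_cont; intros; apply continuous_const. apply ex_RInt_cont; auto.
  intros; apply Hp; lra.
  rewrite RInt_const. reflexivity.
Qed.

Lemma RInt_mono_int (f : R -> R) a b c : a <= b <= c -> (forall y, continuous f y) ->
  (forall x, 0 <= f x) -> RInt f a b <= RInt f a c.
Proof.
  intros Habc Hc Hp.
  rewrite <- (RInt_Chasles f a b c) by (apply ex_RInt_cont; auto).
  change plus with Rplus.
  assert (0 <= RInt f b c) by (apply RInt_ge0; auto; lra). lra.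
Qed.

Lemma Rabs_pow4 x : Rabs x ^ 4 = x ^ 4.
Proof.
  replace 4%nat with (2 * 2)%nat by reflexivity. rewrite !pow_mult, pow2_abs. reflexivity.
Qed.

Lemma GN (g q : R -> R) B A E V :
  B < A -> 0 < E -> (forall x, is_derive g x (- q x / 2)) -> (forall x, continuous q x) ->
  RInt (fun b => g b ^ 4) B A <= 2 * (A - B) * E ->
  RInt (fun b => q b ^ 2) B A <= (A - B) * E ->
  V = Rabs (g B) ->
  V ^ 6 <= 128 * (A - B) ^ 2 * E ^ 2 \/ V ^ 4 <= 32 * E.
Proof.
  intros HBA HE Hg Hq I4 I2 HV.
  set (l := A - B) in *.
  assert (Hl : 0 < l) by (unfold l; lra).
  assert (Hgc : forall x, continuous g x).
  { intros x. apply (ex_derive_continuous (K := R_AbsRing) (V := R_NormedModule) g). eexists; apply Hg. }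
  assert (Hg4 : forall x, continuous (fun b => g b ^ 4) x) by (intros; apply cR_pow; auto).
  assert (Hq2 : forall x, continuous (fun b => q b ^ 2) x) by (intros; apply cR_pow; auto).
  assert (HV0 : 0 <= V) by (rewrite HV; apply Rabs_pos).
  destruct (Req_dec V 0) as [HV1|HV1].
  { right. rewrite HV1. simpl. lra. }
  assert (HVp : 0 < V) by lra.
  set (lam := 4 * l * E / V).
  assert (Hlam : 0 < lam) by (unfold lam; apply Rdiv_lt_0_compat; nra).
  set (r := Rmin l (V ^ 2 / (4 * l * E))).
  assert (Hr0 : 0 < r).
  { unfold r. apply Rmin_pos; auto. apply Rdiv_lt_0_compat. nra. nra. }
  assert (Hrl : r <= l) by apply Rmin_l.
  assert (Hrv : r <= V ^ 2 / (4 * l * E)) by apply Rmin_r.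
  assert (Hlow : forall b, B <= b <= B + r -> V / 2 <= Rabs (g b)).
  { intros b Hb.
    assert (Hd : g b - g B = RInt (fun s => - q s / 2) B b).
    { symmetry. apply (RInt_of_deriv g (fun s => - q s / 2)); auto.
      intros. apply cR_mult. apply (continuous_opp q); auto. apply cR_const. }
    assert (Hc1 : forall y, continuous (fun s => - q s / 2) y).
    { intros. apply cR_mult. apply (continuous_opp q); auto. apply cR_const. }
    assert (Hc2 : forall y, continuous (fun s => / (4 * lam) * q s ^ 2 + lam / 4) y).
    { intros. apply cR_plus. apply cR_mult. apply cR_const. auto. apply cR_const. }
    assert (Hb1 : Rabs (RInt (fun s => - q s / 2) B b) <=
                  RInt (fun s => / (4 * lam) * q s ^ 2 + lam / 4) B b).
    { eapply Rle_trans. apply abs_RInt_le. lra. apply ex_RInt_cont; auto.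
      apply RInt_le. lra.
      apply ex_RInt_cont. intros. apply (continuous_comp _ Rabs). auto. apply continuous_Rabs.
      apply ex_RInt_cont; auto.
      intros s _. rewrite <- (pow2_abs (q s)).
      replace (- q s / 2) with (- (q s / 2)) by field.
      rewrite Rabs_Ropp. unfold Rdiv. rewrite Rabs_mult, (Rabs_right (/ 2)) by lra.
      set (a := Rabs (q s)).
      assert (Ha : 0 <= (a - lam) ^ 2 / (4 * lam)).
      { apply Rmult_le_pos. apply pow2_ge_0. left; apply Rinv_0_lt_compat; lra. }
      assert (E1 : / (4 * lam) * a ^ 2 + lam / 4 - a * / 2 = (a - lam) ^ 2 / (4 * lam)) by (field; lra).
      lra. }
    assert (HI : RInt (fun s => / (4 * lam) * q s ^ 2 + lam / 4) B b
                 = / (4 * lam) * RInt (fun s => q s ^ 2) B b + (b - B) * (lam / 4)).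
    { rewrite (RInt_plus (V := R_CompleteNormedModule) (fun s => / (4 * lam) * q s ^ 2) (fun _ => lam / 4)).
      rewrite (RInt_scal (V := R_CompleteNormedModule) (fun s => q s ^ 2)).
      rewrite RInt_const. reflexivity.
      apply ex_RInt_cont; auto.
      apply ex_RInt_cont; intros; apply cR_mult; auto; apply cR_const.
      apply ex_RInt_cont; intros; apply cR_const. }
    assert (Hq2b : RInt (fun s => q s ^ 2) B b <= l * E).
    { eapply Rle_trans. 2: apply I2. apply RInt_mono_int; [unfold l in Hrl; lra | auto | intros; apply pow2_ge_0]. }
    assert (Hfin : / (4 * lam) * RInt (fun s => q s ^ 2) B b + (b - B) * (lam / 4) <= 5 * V / 16).
    { assert (/ (4 * lam) * RInt (fun s => q s ^ 2) B b <= / (4 * lam) * (l * E)).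
      { apply Rmult_le_compat_l; auto. left; apply Rinv_0_lt_compat; lra. }
      assert (/ (4 * lam) * (l * E) = V / 16) by (unfold lam; field; split; lra).
      assert ((b - B) * (lam / 4) <= V ^ 2 / (4 * l * E) * (lam / 4)).
      { apply Rmult_le_compat_r; lra. }
      assert (V ^ 2 / (4 * l * E) * (lam / 4) = V / 4) by (unfold lam; field; split; lra).
      lra. }
    assert (Htri : Rabs (g B) <= Rabs (g b) + Rabs (g b - g B)).
    { replace (g B) with (g b - (g b - g B)) at 1 by ring.
      eapply Rle_trans. apply Rabs_triang. rewrite Rabs_Ropp. lra. }
    rewrite Hd in Htri. rewrite <- HV in Htri. lra. }
  assert (Hlow4 : forall b, B <= b <= B + r -> V ^ 4 / 16 <= g b ^ 4).
  { intros b Hb. rewrite <- (Rabs_pow4 (g b)).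
    replace (V ^ 4 / 16) with ((V / 2) ^ 4) by field.
    apply pow_incr. split. lra. apply Hlow; auto. }
  assert (Hint : r * (V ^ 4 / 16) <= 2 * l * E).
  { eapply Rle_trans. 2: apply I4.
    eapply Rle_trans. 2: { apply (RInt_mono_int _ B (B + r) A). unfold l in Hrl; lra. auto.
      intros x; rewrite <- (Rabs_pow4 (g x)); apply pow_le, Rabs_pos. }
    replace r with (B + r - B) at 1 by ring.
    apply RInt_ge_c. lra. auto. intros; apply Hlow4; lra. }
  destruct (Rle_dec l (V ^ 2 / (4 * l * E))) as [Hc|Hc].
  - right. unfold r in Hint. rewrite Rmin_left in Hint by auto.
    assert (l * (V ^ 4 - 32 * E) <= 0) by nra.
    assert (V ^ 4 - 32 * E <= 0).
    { destruct (Rle_dec (V ^ 4 - 32 * E) 0); auto. nra. }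
    lra.
  - left. unfold r in Hint. rewrite Rmin_right in Hint by lra.
    assert (E1 : V ^ 2 / (4 * l * E) * (V ^ 4 / 16) = V ^ 6 / (64 * l * E)) by (field; split; lra).
    rewrite E1 in Hint.
    assert (Hk : 0 < 64 * l * E) by nra.
    assert (E2 : V ^ 6 = V ^ 6 / (64 * l * E) * (64 * l * E)) by (field; lra).
    rewrite E2. replace (128 * l ^ 2 * E ^ 2) with (2 * l * E * (64 * l * E)) by ring.
    apply Rmult_le_compat_r; lra.
Qed.

Lemma pow_strict a b n : 0 <= a < b -> a ^ S n < b ^ S n.
Proof.
  intros H. induction n.
  - simpl. lra.
  - change (a * a ^ S n < b * b ^ S n).
    assert (0 <= a ^ S n) by (apply pow_le; lra). nra.
Qed.

Lemma final_arith V t E C : 1 <= t -> 0 < E -> 0 <= V -> C = 512 * E ^ 2 + 32 * E + 1 ->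
  (V ^ 6 <= 128 * (2 * t) ^ 2 * E ^ 2 \/ V ^ 4 <= 32 * E) -> V <= C * Rpower t (1 / 3).
Proof.
  intros Ht HE HV HC Hcase.
  set (T := Rpower t (1 / 3)).
  assert (HT1 : 1 <= T).
  { unfold T. apply Rle_trans with (Rpower t 0). rewrite Rpower_O; lra. apply Rle_Rpower; lra. }
  assert (HT3 : T ^ 3 = t).
  { unfold T. rewrite <- Rpower_pow by (apply exp_pos).
    rewrite Rpower_mult. replace (1 / 3 * INR 3) with 1 by (simpl; field).
    apply Rpower_1; lra. }
  assert (HC1 : 1 <= C) by nra.
  destruct (Rle_or_lt V (C * T)) as [H|H]; auto. exfalso.
  assert (Hy : 1 <= C * T) by nra.
  destruct Hcase as [H6|H4].
  - assert (Hs : (C * T) ^ 6 < V ^ 6) by (apply pow_strict; lra).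
    assert (E6 : (C * T) ^ 6 = C ^ 6 * t ^ 2).
    { rewrite <- HT3. ring. }
    assert (Hc6 : C <= C ^ 6).
    { replace C with (C ^ 1) at 1 by ring. apply Rle_pow; auto; lia. }
    assert (512 * E ^ 2 <= C) by nra.
    assert (1 <= t ^ 2) by nra.
    nra.
  - assert (Hs : (C * T) ^ 4 < V ^ 4) by (apply pow_strict; lra).
    assert (Hc4 : C <= C ^ 4).
    { replace C with (C ^ 1) at 1 by ring. apply Rle_pow; auto; lia. }
    assert (HT4 : 1 <= T ^ 4) by (apply pow_R1_Rle; lra).
    assert ((C * T) ^ 4 = C ^ 4 * T ^ 4) by ring.
    nra.
Qed.

Lemma sq_bound (y M : R) : Rabs y <= M -> y ^ 2 <= M ^ 2.
Proof. intros H. apply pow_maj_Rabs. auto. Qed.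

Lemma edge_bounds u0 u1 u M A B : is_C1 u0 -> (forall x, continuous u1 x) ->
  (forall x, Rabs (u0 x) <= M) -> (forall x, Rabs (Derive u0 x) <= M) ->
  (forall x, Rabs (u1 x) <= M) -> is_solution_NLW3 u0 u1 u -> B <= A ->
  RInt (fun b => W u A b ^ 4) B A <= 2 * (A - B) * (4 * M ^ 2 + M ^ 4 / 2 + 1) /\
  RInt (fun b => Qw u0 u1 u A b ^ 2) B A <= (A - B) * (4 * M ^ 2 + M ^ 4 / 2 + 1).
Proof.
  intros H0 H1 Hb0 Hbd Hb1 Hs HBA.
  set (E := 4 * M ^ 2 + M ^ 4 / 2 + 1).
  assert (HW := cont2_W u (proj1 Hs)).
  assert (HP := cont2_Pw u0 u1 u H0 H1 Hs).
  assert (HQ := cont2_Qw u0 u1 u H0 H1 Hs).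
  assert (HM : 0 <= M) by (eapply Rle_trans; [apply Rabs_pos|apply (Hb0 0)]).
  assert (Hu04 : forall a, u0 a ^ 4 <= M ^ 4) by (intros; apply pow_maj_Rabs; auto).
  assert (HDP : forall a, Pw u0 u1 u a a ^ 2 + / 2 * W u a a ^ 4 <= E).
  { intros a. rewrite Pw_diag, (W_diag u0 u1 u a Hs).
    assert ((Derive u0 a + u1 a) ^ 2 <= (2 * M) ^ 2).
    { apply sq_bound. eapply Rle_trans. apply Rabs_triang. generalize (Hbd a) (Hb1 a). lra. }
    generalize (Hu04 a). unfold E. lra. }
  assert (HDQ : forall a, Qw u0 u1 u a a ^ 2 + / 2 * W u a a ^ 4 <= E).
  { intros a. rewrite Qw_diag, (W_diag u0 u1 u a Hs).
    assert ((- Derive u0 a + u1 a) ^ 2 <= (2 * M) ^ 2).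
    { apply sq_bound. eapply Rle_trans. apply Rabs_triang. rewrite Rabs_Ropp. generalize (Hbd a) (Hb1 a). lra. }
    generalize (Hu04 a). unfold E. lra. }
  assert (HcP : forall y, continuous (fun a => Pw u0 u1 u a a ^ 2 + / 2 * W u a a ^ 4) y).
  { apply (cont_diag (fun x y => Pw u0 u1 u x y ^ 2 + / 2 * W u x y ^ 4)).
    apply cont2_plus. apply cont2_pow; auto. apply cont2_mult. apply cont2_cst. apply cont2_pow; auto. }
  assert (HcQ : forall y, continuous (fun a => Qw u0 u1 u a a ^ 2 + / 2 * W u a a ^ 4) y).
  { apply (cont_diag (fun x y => Qw u0 u1 u x y ^ 2 + / 2 * W u x y ^ 4)).
    apply cont2_plus. apply cont2_pow; auto. apply cont2_mult. apply cont2_cst. apply cont2_pow; auto. }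
  split.
  - generalize (L_identity u0 u1 u B A H0 H1 Hs). intros EL.
    assert (R1 : RInt (fun a => Pw u0 u1 u a a ^ 2 + / 2 * W u a a ^ 4) B A <= (A - B) * E).
    { apply RInt_le_c; auto. }
    assert (R2 : 0 <= RInt (fun a' => Pw u0 u1 u a' B ^ 2) B A).
    { apply RInt_ge0; auto. intros; apply (cont2_slice1 (fun x y => Pw u0 u1 u x y ^ 2)). apply cont2_pow; auto.
      intros; apply pow2_ge_0. }
    lra.
  - generalize (K_identity u0 u1 u A B H0 H1 Hs). intros EK.
    assert (R1 : RInt (fun a => Qw u0 u1 u a a ^ 2 + / 2 * W u a a ^ 4) B A <= (A - B) * E).
    { apply RInt_le_c; auto. }
    assert (R2 : 0 <= RInt (fun a => W u a B ^ 4) B A).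
    { apply RInt_ge0; auto. intros; apply (cont2_slice1 (fun x y => W u x y ^ 4)). apply cont2_pow; auto.
      intros; rewrite <- Rabs_pow4; apply pow_le, Rabs_pos. }
    lra.
Qed.

Theorem proposition1 :
  forall M : R, exists C : R,
  forall (u0 u1 : R -> R) (u : R -> R -> R),
    is_C1 u0 ->
    (forall x, continuous u1 x) ->
    (forall x, Rabs (u0 x) <= M) ->
    (forall x, Rabs (Derive u0 x) <= M) ->
    (forall x, Rabs (u1 x) <= M) ->
    is_solution_NLW3 u0 u1 u ->
    forall t x, 1 <= t -> Rabs (u t x) <= C * Rpower t (1 / 3).
Proof.
  intros M.
  set (E := 4 * M ^ 2 + M ^ 4 / 2 + 1).
  exists (512 * E ^ 2 + 32 * E + 1).
  intros u0 u1 u H0 H1 Hb0 Hbd Hb1 Hs t x Ht.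
  assert (HE : 0 < E).
  { unfold E. assert (0 <= M ^ 2) by apply pow2_ge_0.
    assert (0 <= M ^ 4) by (replace 4%nat with (2 * 2)%nat by reflexivity; rewrite pow_mult; apply pow2_ge_0).
    lra. }
  destruct (edge_bounds u0 u1 u M (x + t) (x - t) H0 H1 Hb0 Hbd Hb1 Hs) as [I4 I2]. lra.
  fold E in I4, I2.
  apply (final_arith _ t E); auto. apply Rabs_pos.
  replace (2 * t) with (x + t - (x - t)) by ring.
  apply (GN (fun b => W u (x + t) b) (fun b => Qw u0 u1 u (x + t) b) (x - t) (x + t) E); auto.
  lra.
  intros b. apply (dW_b u0 u1 u); auto.
  intros b. apply (cont2_slice2 (Qw u0 u1 u)). apply cont2_Qw; auto.
  unfold W. f_equal. f_equal; field.
Qed.
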